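(* Let $X$ be a Hausdorff $k$-space and $A$ a full unital subalgebra of $C(X)$; when $\mathbb{K}=\mathbb{C}$ assume moreover that $A$ is self-adjoint ($f\in A\Rightarrow\overline f\in A$). Let $\tau$ be a locally convex topology on $A$ making the inclusion $(A,\tau)\hookrightarrow C(X)$ continuous, and let $\chi_c(A)$ be the set of $\tau$-continuous characters (unital multiplicative linear functionals) of $A$ with the subspace topology of $A'_c$, i.e. the topology of uniform convergence on precompact subsets of $(A,\tau)$. If $A_{[0,1]}$ separates compact sets and closed sets in $X$, then the map $\delta:X\to\chi_c(A)$, $x\mapsto\delta_x$ ($\delta_x(f)=f(x)$) is well defined and is a homeomorphism onto its image. If in addition $\tau$ is compactly localized, then $\delta$ is surjective, hence a homeomorphism $X\to\chi_c(A)$.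
   Context: A Hausdorff space is a $k$-space if every subset meeting each compact set in a relatively closed set is closed. $C(X)$ is the algebra of continuous scalar functions with the topology of uniform convergence on compact sets. A unital subalgebra $A\subseteq C(X)$ is full if whenever $f\in A$ is invertible in $C(X)$ (i.e. vanishes nowhere), $f^{-1}\in A$. $A_{[0,1]}=\{f\in A: f(x)\in[0,1]\ \forall x\in X\}$. $A_{[0,1]}$ separates compact sets and closed sets if for every compact $K$ and closed $C$ with $K\cap C=\emptyset$ there is $f\in A_{[0,1]}$ with $f|_K=1$ and $f|_C=0$. A locally convex topology $\tau$ on a subspace $A\subseteq C(X)$ is compactly localized if for every $\tau$-continuous seminorm $q$ on $A$ there is a compact $K\subseteq X$ such that $q(f)=0$ for all $f\in A$ with $f|_K=0$. *)

(* Defs.v *)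
(* Scalars: K : numFieldType (instantiated with
   K = R and K = R[i] for R : realType). *)
From mathcomp Require Import all_boot all_order all_algebra.
From mathcomp Require Import all_classical all_reals all_analysis.
From mathcomp Require Export complex.
Import numFieldNormedType.Exports.
Set Implicit Arguments. Unset Strict Implicit. Unset Printing Implicit Defensive.
Import Order.TTheory GRing.Theory Num.Theory.
Local Open Scope classical_set_scope.
Local Open Scope ring_scope.

Section Defs.
Context {X : topologicalType} {K : numFieldType}.

Definition k_space : Prop :=
  forall F : set X,
    (forall Kc : set X, compact Kc ->
       exists C : set X, closed C /\ F `&` Kc = C `&` Kc) ->
    closed F.

Definition unital_subalgebra (A : set (X -> K)) : Prop :=
  [/\ (forall f, A f -> continuous f),
      A (fun _ => 1),
      (forall f g, A f -> A g -> A (fun x => f x + g x)),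
      (forall (a : K) f, A f -> A (fun x => a * f x)) &
      (forall f g, A f -> A g -> A (fun x => f x * g x))].

Definition full (A : set (X -> K)) : Prop :=
  forall f, A f -> (forall x, f x != 0) -> A (fun x => (f x)^-1).

Definition self_adjoint (conj : K -> K) (A : set (X -> K)) : Prop :=
  forall f, A f -> A (fun x => conj (f x)).

(* q is a seminorm on the subspace A (only its values on A matter) *)
Definition seminorm_on (A : set (X -> K)) (q : (X -> K) -> K) : Prop :=
  [/\ (forall f, A f -> 0 <= q f),
      (forall f g, A f -> A g -> q (fun x => f x + g x) <= q f + q g) &
      (forall (a : K) f, A f -> q (fun x => a * f x) = `|a| * q f)].

(* The locally convex topology tau on A is the one generated by a family
   S of seminorms on A.  A function r on A is tau-bounded if it is dominated
   by a multiple of a finite sum of seminorms of S. *)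
Definition tau_bounded (A : set (X -> K)) (S : set ((X -> K) -> K))
    (r : (X -> K) -> K) : Prop :=
  exists (n : nat) (ps : 'I_n -> (X -> K) -> K) (C : K),
    (forall i, S (ps i)) /\
    forall f, A f -> r f <= C * \sum_(i < n) ps i f.

Definition tau_continuous_seminorm A S (q : (X -> K) -> K) : Prop :=
  seminorm_on A q /\ tau_bounded A S q.

(* continuity of the inclusion (A, tau) -> C(X), C(X) carrying the
   topology of uniform convergence on compact sets *)
Definition inclusion_continuous A S : Prop :=
  forall Kc : set X, compact Kc ->
    exists (n : nat) (ps : 'I_n -> (X -> K) -> K) (C : K),
      (forall i, S (ps i)) /\
      forall f, A f -> forall x, Kc x -> `|f x| <= C * \sum_(i < n) ps i f.

Definition continuous_character A S (phi : (X -> K) -> K) : Prop :=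
  [/\ (forall f g, A f -> A g -> phi (fun x => f x + g x) = phi f + phi g),
      (forall (a : K) f, A f -> phi (fun x => a * f x) = a * phi f),
      (forall f g, A f -> A g -> phi (fun x => f x * g x) = phi f * phi g),
      phi (fun _ => 1) = 1 &
      tau_bounded A S (fun f => `|phi f|)].

Definition precompact A S (B : set (X -> K)) : Prop :=
  B `<=` A /\
  forall q, tau_continuous_seminorm A S q ->
  forall eps : K, 0 < eps ->
    exists (n : nat) (c : 'I_n -> X -> K),
      (forall i, A (c i)) /\
      forall f, B f -> exists i, q (fun x => f x - c i x) < eps.

(* open sets of A'_c : topology of uniform convergence on precompact subsets
   of (A, tau); the topology of chi_c(A) is the induced one. *)
Definition Ac_open A S (O : set ((X -> K) -> K)) : Prop :=
  forall phi, O phi ->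
    exists (B : set (X -> K)) (eps : K),
      [/\ precompact A S B, 0 < eps &
          forall psi, (forall f, B f -> `|psi f - phi f| < eps) -> O psi].

Definition separates_compact_closed (A : set (X -> K)) : Prop :=
  forall Kc C : set X, compact Kc -> closed C -> Kc `&` C = set0 ->
    exists f, [/\ A f, (forall x, 0 <= f x <= 1),
                  (forall x, Kc x -> f x = 1) & (forall x, C x -> f x = 0)].

Definition compactly_localized A S : Prop :=
  forall q, tau_continuous_seminorm A S q ->
    exists Kc : set X, compact Kc /\
      forall f, A f -> (forall x, Kc x -> f x = 0) -> q f = 0.

Definition delta (x : X) : (X -> K) -> K := fun f => f x.

End Defs.

Definition theorem6p13_for (K : numFieldType) (conj : K -> K) : Prop :=
  forall (X : topologicalType) (A : set (X -> K)) (S : set ((X -> K) -> K)),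
    hausdorff_space X -> @k_space X ->
    unital_subalgebra A -> full A -> self_adjoint conj A ->
    (forall p, S p -> seminorm_on A p) ->
    inclusion_continuous A S ->
    separates_compact_closed A ->
    [/\
        (forall x : X, continuous_character A S (delta x)),
        (forall x y : X, (forall f, A f -> delta x f = delta y f) -> x = y),
        (forall O, Ac_open A S O -> open (@delta X K @^-1` O)),
        (* delta is open onto its image *)
        (forall U : set X, open U ->
           exists O, Ac_open A S O /\ @delta X K @^-1` O = U) &
        (compactly_localized A S ->
           forall phi, continuous_character A S phi ->
             exists x : X, forall f, A f -> phi f = delta x f)].

(* Main.v *)
From HB Require Import structures.
Require Import Defs.
From mathcomp Require Import all_boot all_order all_algebra.
From mathcomp Require Import all_classical all_reals all_analysis.
From mathcomp Require Import complex ring finmap.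
Import numFieldNormedType.Exports.
Import Order.TTheory GRing.Theory Num.Theory.
Local Open Scope classical_set_scope.
Local Open Scope ring_scope.

Section PC.
Variables (T : topologicalType) (x0 : T).
Definition pT : Type := T.
HB.instance Definition _ := Topological.on pT.
HB.instance Definition _ := isPointed.Build pT x0.
Lemma compact_fcover_p (A : set T) : compact A -> @cover_compact T A.
Proof.
move=> cA. have := @compact_cover pT. move=> e.
have : @compact pT A by [].
by rewrite e.
Qed.
End PC.

Lemma compact_fcover (T : topologicalType) (A : set T) : compact A -> @cover_compact T A.
Proof.
move=> cA I D f fo cov.
case: (pselect (exists x0 : T, True)) => [[x0 _]|nx].
  have := @compact_fcover_p T x0 A cA I D f fo cov. exact.
exists (@fset0 I) => // x; exfalso; apply: nx; by exists x.
Qed.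

Lemma A0 (X : topologicalType) (K : numFieldType) (A : set (X -> K)) :
  unital_subalgebra A -> A (fun _ => 0).
Proof.
case=> _ A1 _ AZ _.
have -> : (fun _ : X => 0 : K) = (fun x => 0 * (fun _ => 1) x).
  by apply: funext => x; rewrite mul0r.
exact: AZ.
Qed.

Lemma Acst (X : topologicalType) (K : numFieldType) (A : set (X -> K)) a :
  unital_subalgebra A -> A (fun _ => a).
Proof.
case=> _ A1 _ AZ _.
have -> : (fun _ : X => a) = (fun x => a * (fun _ => 1) x).
  by apply: funext => x; rewrite mulr1.
exact: AZ.
Qed.

Lemma Asub (X : topologicalType) (K : numFieldType) (A : set (X -> K)) f g :
  unital_subalgebra A -> A f -> A g -> A (fun x => f x - g x).
Proof.
case=> _ A1 AD AZ _ Af Ag.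
have -> : (fun x => f x - g x) = (fun x => f x + (fun x => (-1) * g x) x).
  by apply: funext => x; rewrite mulN1r.
by apply: AD => //; apply: AZ.
Qed.

Lemma part1 (X : topologicalType) (K : numFieldType) (A : set (X -> K)) S :
  inclusion_continuous A S -> forall x : X, continuous_character A S (delta x).
Proof.
move=> hinc x; split => //.
have [n [ps [C [hS hb]]]] := hinc _ (@compact_set1 _ x).
exists n, ps, C; split => // f Af; exact: hb.
Qed.

Lemma part2 (X : topologicalType) (K : numFieldType) (A : set (X -> K)) :
  hausdorff_space X -> separates_compact_closed A ->
  forall x y : X, (forall f, A f -> delta x f = delta y f) -> x = y.
Proof.
move=> hH hsep x y heq; apply: contrapT => nxy.
have cl1 : closed [set y] := compact_closed hH (@compact_set1 _ y).
have disj : [set x] `&` [set y] = set0.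
  by apply/seteqP; split => // z [/= -> e]; exfalso; apply: nxy.
have [f [Af _ f1 f0]] := hsep _ _ (@compact_set1 _ x) cl1 disj.
have := heq f Af; rewrite /delta f1 // f0 //.
by move/eqP; rewrite oner_eq0.
Qed.

Lemma part4 (X : topologicalType) (K : numFieldType) (A : set (X -> K)) S :
  separates_compact_closed A ->
  forall U : set X, open U ->
           exists O, Ac_open A S O /\ @delta X K @^-1` O = U.
Proof.
move=> hsep U oU.
exists (fun psi : (X -> K) -> K => exists x f, [/\ U x, A f, f x = 1,
   (forall y, ~ U y -> f y = 0) & `|psi f - 1| < 1]).
split.
  move=> psi [x [f [Ux Af fx1 f0 hlt]]].
  exists [set f], (1 - `|psi f - 1|); split.
  - split; first by move=> g ->.
    move=> q [[q0 qD qZ] _] eps eps0; exists 1%N, (fun _ => f); split => // g ->.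
    exists ord0.
    have -> : (fun x => f x - f x) = (fun x => 0 * f x).
      by apply: funext => y; rewrite subrr mul0r.
    by rewrite qZ // normr0 mul0r.
  - by rewrite subr_gt0.
  - move=> psi' /(_ f erefl) h; exists x, f; split => //.
    have -> : psi' f - 1 = (psi' f - psi f) + (psi f - 1) by rewrite addrA subrK.
    apply: le_lt_trans (ler_normD _ _) _.
    by apply: (lt_le_trans (ltr_leD h (lexx _))); rewrite subrK.
apply/seteqP; split.
  move=> y [x [f [Ux Af fx1 f0 hlt]]]; apply: contrapT => nUy.
  move: hlt; rewrite /delta f0 // sub0r normrN normr1 ltxx.
  done.
move=> y Uy.
have cl : closed (~` U) by exact: open_closedC.
have disj : [set y] `&` ~` U = set0.
  by apply/seteqP; split => // z [/= -> ].
have [f [Af _ f1 f0]] := hsep _ _ (@compact_set1 _ y) cl disj.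
exists y, f; split => //; first exact: f1.
by rewrite /delta f1 // subrr normr0 ltr01.
Qed.

Lemma qsemi (X : topologicalType) (K : numFieldType) (A : set (X -> K)) S
  n (ps : 'I_n -> (X -> K) -> K) (C : K) :
  (forall p, S p -> seminorm_on A p) -> (forall i, S (ps i)) ->
  tau_continuous_seminorm A S (fun g => `|C| * \sum_(i < n) ps i g).
Proof.
move=> hSn hS; split; last first.
  by exists n, ps, `|C|; split => // f Af.
split.
- move=> f Af; apply: mulr_ge0 => //; apply: sumr_ge0 => i _.
  by case: (hSn _ (hS i)) => + _ _; apply.
- move=> f g Af Ag; rewrite -mulrDr -big_split /=; apply: ler_wpM2l => //.
  by apply: ler_sum => i _; case: (hSn _ (hS i)) => _ + _; apply.
- move=> a f Af.
  rewrite (eq_bigr (fun i => `|a| * ps i f)); last first.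
    by move=> i _; case: (hSn _ (hS i)) => _ _ ->.
  by rewrite -mulr_sumr mulrCA.
Qed.

Lemma part3 (X : topologicalType) (K : numFieldType) (A : set (X -> K)) S :
  @k_space X -> unital_subalgebra A ->
  (forall p, S p -> seminorm_on A p) ->
  inclusion_continuous A S ->
  forall O, Ac_open A S O -> open (@delta X K @^-1` O).
Proof.
move=> hk hA hSn hinc O hO.
set P := @delta X K @^-1` O.
rewrite -closedC; apply: hk => Kc cK.
exists (closure (~` P `&` Kc)); split; first exact: closed_closure.
apply/seteqP; split.
  by move=> y [nPy Ky]; split => //; apply: subset_closure.
move=> z [clz Kz]; split => // Pz.
have [B [eps [[BA hB] eps0 hO']]] := hO _ Pz.
have [n [ps [C [hS hb]]]] := hinc _ cK.
have qsn := @qsemi X K A S n ps C hSn hS.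
set q := (fun g => `|C| * \sum_(i < n) ps i g) in qsn.
set d := eps / 3%:R.
have d0 : 0 < d by apply: divr_gt0 => //; rewrite ltr0n.
have [m [c [Ac hc]]] := hB q qsn d d0.
have qbound : forall g, A g -> forall y, Kc y -> `|g y| <= q g.
  move=> g Ag y Ky; have h := hb g Ag y Ky.
  have s0 : 0 <= \sum_(i < n) ps i g.
    by apply: sumr_ge0 => i _; case: (hSn _ (hS i)) => + _ _; apply.
  have Cs0 : 0 <= C * \sum_(i < n) ps i g := le_trans (normr_ge0 _) h.
  by apply: (le_trans h); rewrite /q -[X in X <= _]ger0_norm // normrM (ger0_norm s0).
have hcont : forall f, A f -> continuous f by case: hA.
have nb : \forall y \near z, forall i, `|c i z - c i y| < d.
  apply: filter_forall => i; apply: cvgr_dist_lt => //.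
  exact: (hcont _ (Ac i) z).
have [w [[nPy Kw] hy]] := clz _ nb.
have nPw : ~ P w := nPy.
suff Pw : P w by exact: nPw Pw.
apply: hO' => f Bf; rewrite /delta.
have [i hi] := hc f Bf.
have Afc : A (fun x => f x - c i x) := @Asub X K A f (c i) hA (BA _ Bf) (Ac i).
have h1 := le_lt_trans (qbound _ Afc w Kw) hi.
have h2 := le_lt_trans (qbound _ Afc z Kz) hi.
have h3 := hy i.
rewrite /= in h1 h2.
have -> : f w - f z = (f w - c i w) + (c i w - c i z) + - (f z - c i z) by ring.
apply: le_lt_trans (ler_normD _ _) _; rewrite normrN.
have -> : eps = d + d + d by rewrite /d; field.
apply: ltrD => //; apply: le_lt_trans (ler_normD _ _) _; apply: ltrD => //.
by rewrite distrC.
Qed.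

Lemma part5 (X : topologicalType) (K : numFieldType) (conj : K -> K)
  (A : set (X -> K)) S :
  (forall z, 0 <= z * conj z) -> (forall z, z != 0 -> z * conj z != 0) ->
  unital_subalgebra A -> full A -> self_adjoint conj A ->
  separates_compact_closed A ->
  compactly_localized A S ->
  forall phi, continuous_character A S phi ->
    exists x : X, forall f, A f -> phi f = delta x f.
Proof.
move=> hc1 hc2 hA hfull hsa hsep hloc phi [phiD phiZ phiM phi1 phib].
have hA' := hA; case: hA' => hcont A1 AD AZ AM.
have phi0 : phi (fun _ => 0) = 0.
  have -> : (fun _ : X => 0 : K) = (fun x => 0 * (fun _ => 1) x).
    by apply: funext => x; rewrite mul0r.
  by rewrite phiZ // mul0r.
have qsn : tau_continuous_seminorm A S (fun f => `|phi f|).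
  split => //; split.
  - by [].
  - by move=> f g Af Ag /=; rewrite phiD //; exact: ler_normD.
  - by move=> a f Af /=; rewrite phiZ // normrM.
have [Kc [cK hK]] := hloc _ qsn.
apply: contrapT => nex.
pose D := [set h : X -> K | [/\ A h, phi h = 0 & forall y, 0 <= h y]].
pose fam := fun h : X -> K => [set y | h y != 0].
have cl0 : closed [set (0 : K)] := compact_closed (@norm_hausdorff _ _) (@compact_set1 _ 0).
have famo : forall h, D h -> open (fam h).
  move=> h [Ah _ _].
  have -> : fam h = h @^-1` (~` [set 0]).
    by apply/seteqP; split => y /=; [move=> /eqP | move=> /eqP].
  by apply: (proj1 (continuousP _) (hcont _ Ah)); apply: closed_openC.
have cov : Kc `<=` cover D fam.
  move=> x Kx.
  have [f [Af nf]] : exists f, A f /\ phi f != f x.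
    apply: contrapT => hn; apply: nex; exists x => f Af.
    apply: contrapT => ne; apply: hn; exists f; split => //; exact/eqP.
  pose c1 := fun y : X => - phi f * (fun _ => 1) y.
  have Ac1 : A c1 := AZ _ _ A1.
  pose g := fun y => f y + c1 y.
  have Ag : A g := AD _ _ Af Ac1.
  have phig : phi g = 0.
    by rewrite (phiD f c1 Af Ac1) (phiZ _ _ A1) phi1 mulr1 subrr.
  pose cg := fun y => conj (g y).
  have Acg : A cg := hsa g Ag.
  pose h := fun y => g y * cg y.
  have Ah : A h := AM _ _ Ag Acg.
  have phih : phi h = 0 by rewrite (phiM g cg Ag Acg) phig mul0r.
  exists h; first by split => // y; exact: hc1.
  apply: hc2; rewrite /g /c1 mulr1 subr_eq0 eq_sym; exact: nf.
have [D' sD' cov'] := @compact_fcover X Kc cK _ D fam famo cov.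
have DD : forall h, h \in D' -> D h.
  by move=> h /sD'; rewrite in_setE.
have gen : forall s : seq (X -> K), (forall h, h \in s -> D h) ->
    A (fun y => \sum_(h <- s) h y) /\ phi (fun y => \sum_(h <- s) h y) = 0.
  elim => [|h s IH] hs.
    have -> : (fun y => \sum_(h <- [::]) h y) = (fun _ : X => 0 : K).
      by apply: funext => y; rewrite big_nil.
    by split; [exact: A0 | exact: phi0].
  have [Ah phih _] := hs h (mem_head _ _).
  have hs' : forall k, k \in s -> D k by move=> k ks; apply: hs; rewrite inE ks orbT.
  have [As phis] := IH hs'.
  have -> : (fun y => \sum_(k <- h :: s) k y) =
            (fun y => h y + (fun y => \sum_(k <- s) k y) y).
    by apply: funext => y; rewrite big_cons.
  split; first exact: AD.
  by rewrite (phiD h (fun y => \sum_(k <- s) k y) Ah As) phih phis addr0.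
pose H := fun y => \sum_(h <- D') h y.
have [AH phiH] := gen D' DD.
have H0 : forall y, 0 <= H y.
  by move=> y; rewrite /H big_seq; apply: sumr_ge0 => h /DD [_ _]; apply.
have HK : forall x, Kc x -> H x != 0.
  move=> x Kx; have [h hD' hx] := cov' x Kx.
  rewrite /H big_seq psumr_eq0; last by move=> i /DD [_ _]; apply.
  apply/negP => /allP /(_ h hD'); rewrite hD' /=.
  by move=> /eqP h0; move: hx; rewrite /fam /= h0 eqxx.
have DH : D H by split.
pose W := fam H.
have cl : closed (~` W) := open_closedC (famo H DH).
have disj : Kc `&` ~` W = set0.
  apply/seteqP; split => // y [Ky nW].
  have nW' : ~ W y := nW.
  exfalso; exact: nW' (HK y Ky).
have [e [Ae e01 e1 e0]] := hsep _ _ cK cl disj.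
pose u := fun y => (fun _ => 1) y + (fun y => -1 * e y) y.
have Au : A u := AD _ _ A1 (AZ _ _ Ae).
have phiu : phi u = 0.
  apply/eqP; rewrite -normr_eq0; apply/eqP; apply: (hK u Au) => x Kx.
  by rewrite /u /= e1 // mulN1r subrr.
pose k := fun y => H y + u y.
have Ak : A k := AD _ _ AH Au.
have phik : phi k = 0 by rewrite (phiD H u AH Au) phiH phiu addr0.
have knz : forall y, k y != 0.
  move=> y; rewrite /k /u /= mulN1r.
  have /andP [ey0 ey1] := e01 y.
  case: (boolP (H y == 0)) => [/eqP Hy0 | Hyn].
    have nWy : (~` W) y.
      by rewrite /W /fam /setC /= Hy0 eqxx.
    by rewrite Hy0 (e0 y nWy) oppr0 addr0 add0r oner_eq0.
  have Hp : 0 < H y by rewrite lt_def Hyn H0.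
  have : 0 < H y + (1 - e y) by apply: ltr_wpDr => //; rewrite subr_ge0.
  by move=> /gt_eqF ->.
have Akinv := hfull k Ak knz.
have : phi (fun _ => 1) = phi k * phi (fun y => (k y)^-1).
  rewrite -phiM //; congr phi; apply: funext => y; by rewrite mulfV.
by rewrite phi1 phik mul0r => /eqP; rewrite oner_eq0.
Qed.

Lemma main_gen (K : numFieldType) (conj : K -> K) :
  (forall z, 0 <= z * conj z) -> (forall z, z != 0 -> z * conj z != 0) ->
  theorem6p13_for conj.
Proof.
move=> hc1 hc2 X A S hH hk hA hfull hsa hSn hinc hsep; split.
- exact: part1.
- exact: part2.
- exact: part3.
- exact: part4.
- by move=> hloc; apply: (@part5 X K conj A S).
Qed.

(* K = R (conjugation is the identity, so self-adjointness is vacuous) and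
   K = C = R[i] with complex conjugation, for any model R of the reals. *)
Theorem theorem6p13 :
  (forall R : realType, @theorem6p13_for (R : numFieldType) id) /\
  (forall R : realType,
     @theorem6p13_for (R[i] : numFieldType) (fun z : R[i] => z^*)).
Proof.
split => R; apply: main_gen.
- by move=> z; rewrite -expr2 sqr_ge0.
- by move=> z z0; rewrite mulf_neq0.
- by move=> z; exact: mul_conjC_ge0.
- by move=> z z0; rewrite mul_conjC_eq0.
Qed.
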